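(* (1) Let $\mathbf S=(S,\vee,K)$ be a closure semilattice, and for $n\ge1$ and $a,b_1,\dots,b_n\in S$ set $a\sqsubseteq^n b_1,\dots,b_n$ iff $a\le Kb_1\vee\dots\vee Kb_n$. Then $(S,\vee,(\sqsubseteq^n)_{n\ge1})$ is a principal regular multi-argument specialization semilattice. In particular this applies when $\mathbf S$ is a closure space $(\mathcal P(X),\cup,K)$. (2) If $\mathbf T$ is another closure semilattice and $\varphi:\mathbf S\to\mathbf T$ is a homomorphism of closure semilattices (i.e. $\varphi(a\vee b)=\varphi(a)\vee\varphi(b)$ and $\varphi(Ka)=K\varphi(a)$ for all $a,b$), then $\varphi$ is a homomorphism between the associated multi-argument specialization semilattices defined as in (1).
   Context: A closure operation on a poset is extensive ($x\le Kx$), idempotent ($KKx=Kx$) and isotone. A closure semilattice is a join semilattice with a closure operation; a closure space is $(\mathcal P(X),\cup,K)$ with $K$ a closure operation on $\mathcal P(X)$. A multi-argument specialization semilattice is a join semilattice $(M,\vee)$ (order $a\le b$ iff $a\vee b=b$) with, for each $n\ge1$, an $(n+1)$-ary relation $a\sqsubseteq^n b_1,\dots,b_n$ (also written $a\sqsubseteq b_1,\dots,b_n$) such that: (M1) $a\sqsubseteq a$; (M2) $a\sqsubseteq b_1,\dots,b_n$ and $b_1\sqsubseteq c$ imply $a\sqsubseteq c,b_2,\dots,b_n$; (M3) $a\le b$ and $b\sqsubseteq c_1,\dots,c_m$ imply $a\sqsubseteq c_1,\dots,c_m$; (M4) $a\sqsubseteq b_1,\dots,b_n$ implies $a\sqsubseteq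 b_{\sigma1},\dots,b_{\sigma n}$ for every permutation $\sigma$; (M5) $a\sqsubseteq b_1,\dots,b_n,b_n$ implies $a\sqsubseteq b_1,\dots,b_n$; (M6) $a\sqsubseteq b_1,\dots,b_n$ implies $a\sqsubseteq b_1,\dots,b_n,b_{n+1}$; (M7) $a\sqsubseteq b_1,\dots,b_n$ and $a_1\sqsubseteq b_1,\dots,b_n$ imply $a\vee a_1\sqsubseteq b_1,\dots,b_n$. It is principal if for every $x$ there is a $\le$-largest $y$ with $y\sqsubseteq^1 x$; this $y$ is denoted $Kx$. A principal one is regular if $a\sqsubseteq^n b_1,\dots,b_n$ holds iff $a\le Kb_1\vee\dots\vee Kb_n$, for all $n$ and elements. A homomorphism of multi-argument specialization semilattices is a join-preserving map $\varphi$ such that $a\sqsubseteq^n b_1,\dots,b_n$ implies $\varphi(a)\sqsubseteq^n\varphi(b_1),\dots,\varphi(b_n)$ for all $n$. *)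

(* Defs.v *)
From HB Require Import structures.
From mathcomp Require Import all_boot all_order.
Set Implicit Arguments. Unset Strict Implicit. Unset Printing Implicit Defensive.
Import Order.Theory.
Local Open Scope order_scope.

Definition closure_op (d : Order.disp_t) (S : porderType d) (K : S -> S) : Prop :=
  [/\ (forall x, x <= K x), (forall x, K (K x) = K x)
    & (forall x y, x <= y -> K x <= K y)].

Definition joinl (d : Order.disp_t) (S : joinSemilatticeType d) (b : S) (bs : seq S) : S :=
  foldl (fun acc x => acc `|` x) b bs.

(* A multi-argument relation is encoded as  rel a b bs  meaning
   a ⊑^n b, bs_1, ..., bs_{n-1}  where n = (size bs).+1 >= 1.
   The arity n is thus the length of the nonempty list  b :: bs. *)
Definition mrel (S : Type) := S -> S -> seq S -> Prop.

Definition is_mss (d : Order.disp_t) (S : joinSemilatticeType d) (rel : mrel S) : Prop :=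
  (forall a : S, rel a a [::]) /\
  (forall (a b1 c : S) bs, rel a b1 bs -> rel b1 c [::] -> rel a c bs) /\
  (forall (a b c : S) cs, a <= b -> rel b c cs -> rel a c cs) /\
  (forall (a b b' : S) bs bs', perm_eq (b :: bs) (b' :: bs') ->
              rel a b bs -> rel a b' bs') /\
  (forall (a b1 bn : S) bs, rel a b1 (rcons (rcons bs bn) bn) ->
              rel a b1 (rcons bs bn)) /\
  (* M5, case n = 1 *) (forall (a b : S), rel a b [:: b] -> rel a b [::]) /\
  (forall (a b1 b : S) bs, rel a b1 bs -> rel a b1 (rcons bs b)) /\
  (forall (a a1 b : S) bs, rel a b bs -> rel a1 b bs -> rel (a `|` a1) b bs).

Definition principal_op (d : Order.disp_t) (S : joinSemilatticeType d)
    (rel : mrel S) (K : S -> S) : Prop :=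
  forall x : S, rel (K x) x [::] /\ (forall y, rel y x [::] -> y <= K x).

Definition principal (d : Order.disp_t) (S : joinSemilatticeType d) (rel : mrel S) : Prop :=
  forall x : S, exists y : S, rel y x [::] /\ (forall z, rel z x [::] -> z <= y).

Definition principal_regular (d : Order.disp_t) (S : joinSemilatticeType d)
    (rel : mrel S) : Prop :=
  principal rel /\
  exists K : S -> S, principal_op rel K /\
    forall (a b : S) bs, rel a b bs <-> a <= joinl (K b) (map K bs).

Definition mss_hom (d1 d2 : Order.disp_t) (S : joinSemilatticeType d1)
    (T : joinSemilatticeType d2) (relS : mrel S) (relT : mrel T) (phi : S -> T) : Prop :=
  (forall a b : S, phi (a `|` b) = phi a `|` phi b) /\
  (forall (a b : S) bs, relS a b bs -> relT (phi a) (phi b) (map phi bs)).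

Definition induced_rel (d : Order.disp_t) (S : joinSemilatticeType d) (K : S -> S) : mrel S :=
  fun a b bs => a <= joinl (K b) (map K bs).

(* Main.v *)
Require Import Defs.
From mathcomp Require Import all_boot all_order.
Import Order.Theory.
Local Open Scope order_scope.

Lemma joinl_le (d : Order.disp_t) (S : joinSemilatticeType d) (bs : seq S) (b c : S) :
  (joinl b bs <= c) = (b <= c) && all (fun x => x <= c) bs.
Proof.
elim: bs b => [|x bs IH] b /=; first by rewrite andbT.
rewrite /joinl /= -/(joinl _ _) IH leUx; by rewrite andbA.
Qed.

Lemma joinl_mem (d : Order.disp_t) (S : joinSemilatticeType d) (bs : seq S) (b x : S) :
  x \in b :: bs -> x <= joinl b bs.
Proof.
have := lexx (joinl b bs); rewrite {1}joinl_le => /andP[Hb /allP Ha].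
by rewrite inE => /orP[/eqP->|/Ha].
Qed.

Lemma joinl_sub (d : Order.disp_t) (S : joinSemilatticeType d) (bs cs : seq S) (b c : S) :
  {subset b :: bs <= c :: cs} -> joinl b bs <= joinl c cs.
Proof.
move=> H; rewrite joinl_le; apply/andP; split.
  by apply: joinl_mem; apply: H; rewrite inE eqxx.
apply/allP => x Hx; apply: joinl_mem; apply: H; by rewrite inE Hx orbT.
Qed.

Lemma joinl_hom (d1 d2 : Order.disp_t) (S : joinSemilatticeType d1)
  (T : joinSemilatticeType d2) (phi : S -> T) :
  (forall a b : S, phi (a `|` b) = phi a `|` phi b) ->
  forall bs b, phi (joinl b bs) = joinl (phi b) (map phi bs).
Proof.
move=> H; elim=> [|x bs IH] b //=.
by rewrite /joinl /= -!/(joinl _ _) IH H.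
Qed.

Theorem proposition3p3 :
  (forall (d : Order.disp_t) (S : joinSemilatticeType d) (K : S -> S),
      closure_op K ->
      is_mss (induced_rel K) /\ principal_regular (induced_rel K)) /\
  (forall (d1 d2 : Order.disp_t) (S : joinSemilatticeType d1) (T : joinSemilatticeType d2)
      (KS : S -> S) (KT : T -> T) (phi : S -> T),
      closure_op KS -> closure_op KT ->
      (forall a b : S, phi (a `|` b) = phi a `|` phi b) ->
      (forall a : S, phi (KS a) = KT (phi a)) ->
      mss_hom (induced_rel KS) (induced_rel KT) phi).
Proof.
split.
  move=> d S K [ext idem mono]; rewrite /induced_rel.
  split; last first.
    split.
      move=> x; exists (K x); split => //= z //.
    exists K; split => //; move=> x; split => //= y //.
  split; first by move=> a /=; apply: ext.
  split.
    move=> a b1 c bs H1 H2; apply: (le_trans H1).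
    rewrite joinl_le; apply/andP; split.
      apply: (@le_trans _ _ (K c)); first by rewrite -[X in _ <= X]idem; apply: mono.
      by apply: joinl_mem; rewrite inE eqxx.
    apply/allP => x Hx; apply: joinl_mem; by rewrite inE Hx orbT.
  split; first by move=> a b c cs H1 H2; apply: le_trans H2.
  split.
    move=> a b b' bs bs' Hp H; apply: (le_trans H); apply: joinl_sub => x.
    rewrite -map_cons (perm_mem (perm_map K Hp)) //.
  split.
    move=> a b1 bn bs H; apply: (le_trans H); apply: joinl_sub => x.
    rewrite !map_rcons !inE !mem_rcons !inE mem_rcons inE. by case/orP=> [->|/orP[->|/orP[]->]]; rewrite ?orbT.
  split.
    move=> a b H; apply: (le_trans H); apply: joinl_sub => x /=.
    by rewrite !inE orbb.
  split.
    move=> a b1 b bs H; apply: (le_trans H); apply: joinl_sub => x.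
    rewrite map_rcons !inE mem_rcons inE => /orP[->//|->]; by rewrite !orbT.
  by move=> a a1 b bs H1 H2; rewrite leUx H1 H2.
move=> d1 d2 S T KS KT phi _ _ Hj HK; split => // a b bs.
rewrite /induced_rel => H.
have mono : forall x y, x <= y -> phi x <= phi y.
  by move=> x y /join_idPr <-; rewrite Hj leUl.
apply: (le_trans (mono _ _ H)); rewrite (@joinl_hom _ _ _ _ phi Hj) HK -map_comp.
have -> : [seq (phi \o KS) i | i <- bs] = [seq (KT \o phi) i | i <- bs].
  by apply: eq_map => x /=; rewrite HK.
by rewrite (map_comp KT phi bs); exact: lexx.
Qed.
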